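(* Let $n\ge 5$. For every integer $k$ with $1\le k\le\lfloor\frac{n-1}{2}\rfloor$ there exists a Latin square of order $n$ with inner distance $k$. Moreover, for any Latin square $L$ of order $n$ with inner distance $k$ and any integer $k'$ with $1\le k'<k$, there is a permutation $\sigma$ of $[1,n]$ such that $\sigma(L)$ has inner distance $k'$.
   Context: Symbols are $[1,n]$. For $a,b\in[1,n]$, $\mathrm{dist}(a,b)$ is the minimum of the residues of $a-b$ and $b-a$ modulo $n$ (in $[0,n-1]$). A Latin square of order $n$ is an $n\times n$ matrix over $[1,n]$ with each symbol exactly once in every row and column; its inner distance is the minimum of $\mathrm{dist}$ over symbols in horizontally or vertically adjacent cells. For a permutation $\sigma$ of $[1,n]$, $\sigma(L)$ is obtained by applying $\sigma$ to every entry of $L$. *)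

(* Defs.v *)
From mathcomp Require Import all_boot all_fingroup.
Set Implicit Arguments. Unset Strict Implicit. Unset Printing Implicit Defensive.

(* Symbols [1,n] are represented by 'I_n = {0,...,n-1} via s |-> s-1;
   the cyclic distance is invariant under this shift. *)

Definition cdist (n : nat) (a b : 'I_n) : nat :=
  minn ((a + n - b) %% n) ((b + n - a) %% n).

Definition square (n : nat) := {ffun 'I_n * 'I_n -> 'I_n}.

Definition is_latin (n : nat) (L : square n) : Prop :=
  (forall i : 'I_n, bijective (fun j : 'I_n => L (i, j))) /\
  (forall j : 'I_n, bijective (fun i : 'I_n => L (i, j))).

Definition adjacent (n : nat) (c d : 'I_n * 'I_n) : bool :=
  ((c.1 == d.1) && ((c.2.+1 == d.2 :> nat) || (d.2.+1 == c.2 :> nat))) ||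
  ((c.2 == d.2) && ((c.1.+1 == d.1 :> nat) || (d.1.+1 == c.1 :> nat))).

(* inner distance: minimum of cdist over adjacent cells (the default value n
   is never attained when n >= 2, since adjacent pairs exist and cdist < n) *)
Definition inner_distance (n : nat) (L : square n) : nat :=
  \big[minn/n]_(p : ('I_n * 'I_n) * ('I_n * 'I_n) | adjacent p.1 p.2)
     cdist (L p.1) (L p.2).

Definition permute_square (n : nat) (s : {perm 'I_n}) (L : square n) : square n :=
  [ffun c => s (L c)].

(* Main.v *)
Require Import Defs.
From mathcomp Require Import all_boot all_fingroup.
From mathcomp Require Import zify.

Ltac splitif := repeat match goal with
  |- context [if ?c then _ else _] => let H := fresh "H" in case: (boolP c) => H end.

Definition cd (n a b : nat) : nat :=
  minn (if b <= a then a - b else a + n - b) (if a <= b then b - a else b + n - a).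

Lemma modsub n a b : a < n -> b < n ->
  (a + n - b) %% n = if b <= a then a - b else a + n - b.
Proof.
move=> ha hb; case: leqP => h.
  have -> : a + n - b = (a - b) + n by lia.
  rewrite modnDr modn_small //; lia.
rewrite modn_small //; lia.
Qed.

Lemma cdistE n (a b : 'I_n) : cdist a b = cd n a b.
Proof. by rewrite /cdist /cd !modsub. Qed.

Lemma cd_sym n a b : cd n a b = cd n b a.
Proof. rewrite /cd; splitif; lia. Qed.

Lemma modn2 n x y : x < n -> y < n -> (x + y) %% n = if x + y < n then x + y else x + y - n.
Proof.
move=> hx hy; case: ltnP => h; first by rewrite modn_small.
have -> : x + y = (x + y - n) + n by lia.
rewrite modnDr modn_small; lia.
Qed.

Lemma cd_shift n x y z : x < n -> y < n -> z < n ->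
  cd n ((x + y) %% n) ((x + z) %% n) = cd n y z.
Proof.
move=> hx hy hz; rewrite !modn2 //.
case: (ltnP (x + y) n) => h1; case: (ltnP (x + z) n) => h2; rewrite /cd /=; splitif; lia.
Qed.

Lemma tperm_lip n (u v p q : 'I_n) : val v = (val u).+1 ->
  cdist p q <= cdist (tperm u v p) (tperm u v q) + 1.
Proof.
move=> huv0; have huv : (v : nat) = (u : nat).+1 := huv0; clear huv0.
have := ltn_ord p; have := ltn_ord q; have := ltn_ord u; have := ltn_ord v.
case: tpermP => [->|->|_ _]; case: tpermP => [->|->|_ _];
  rewrite !cdistE /cd; splitif; lia.
Qed.

Lemma ID_lip n (L : square n) s (u v : 'I_n) : val v = (val u).+1 ->
  inner_distance (permute_square s L) <=
  inner_distance (permute_square (s * tperm u v)%g L) + 1.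
Proof.
move=> huv; rewrite /inner_distance.
apply: (big_ind2 (fun a b => a <= b + 1)).
- lia.
- move=> a b c d h1 h2; lia.
- move=> p _; rewrite !ffunE !permM; exact: tperm_lip.
Qed.

Lemma bigmin_le (T : eqType) (r : seq T) (P : pred T) (F : T -> nat) x i0 :
  i0 \in r -> P i0 -> \big[minn/x]_(i <- r | P i) F i <= F i0.
Proof.
elim: r => [//|y r IH]; rewrite inE big_cons => /orP[/eqP <-|hr] hP.
  by rewrite hP geq_minl.
case: ifP => _; last exact: IH.
by rewrite geq_min IH ?orbT.
Qed.

Lemma ID_le_pair n (L : square n) s c d : adjacent c d ->
  inner_distance (permute_square s L) <= cdist (s (L c)) (s (L d)).
Proof.
move=> h; rewrite /inner_distance.
have := @bigmin_le _ _ (fun p => adjacent p.1 p.2)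
   (fun p => cdist (permute_square s L p.1) (permute_square s L p.2)) n (c, d)
   (mem_index_enum _) h.
by rewrite /= !ffunE.
Qed.

Lemma cdist_sym n (a b : 'I_n) : cdist a b = cdist b a.
Proof. by rewrite !cdistE cd_sym. Qed.

Lemma part2 n (Hn : 2 < n) (L : square n) k : is_latin L -> inner_distance L = k ->
  forall k', 1 <= k' < k ->
  exists s : {perm 'I_n}, inner_distance (permute_square s L) = k'.
Proof.
move=> [Hr _] HID k' /andP[Hk1 Hk2].
have h0 : 0 < n by lia.
have h1 : 1 < n by lia.
pose c := (Ordinal h0, Ordinal h0) : 'I_n * 'I_n.
pose d := (Ordinal h0, Ordinal h1) : 'I_n * 'I_n.
have adj : adjacent c d by rewrite /adjacent /= ?eqxx.
have neq : L c != L d.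
  apply/eqP => E; case: (Hr (Ordinal h0)) => g g1 _.
  have e1 := g1 (Ordinal h0); have e2 := g1 (Ordinal h1); simpl in e1, e2.
  rewrite /c /d /= in E; rewrite E in e1; rewrite e1 in e2.
  by move: (congr1 val e2).
have [a [b [hab hle]]] : exists a b : 'I_n, (a : nat) < b /\
    forall s : {perm 'I_n}, inner_distance (permute_square s L) <= cdist (s a) (s b).
  case: (ltngtP (L c) (L d)) => h.
  - by exists (L c), (L d); split => // s; exact: ID_le_pair.
  - by exists (L d), (L c); split => // s; rewrite cdist_sym; exact: ID_le_pair.
  - by move: neq; rewrite (val_inj h) eqxx.
have hb := ltn_ord b.
have claim : forall t, t <= b - a - 1 ->
  (exists s : {perm 'I_n}, inner_distance (permute_square s L) = k') \/
  exists s : {perm 'I_n}, s a = a /\ (s b : nat) = b - t /\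
     k' < inner_distance (permute_square s L).
  elim => [|t IH] ht.
    right; exists 1%g; rewrite !perm1; split => //; split; first lia.
    have -> : permute_square 1 L = L by apply/ffunP => x; rewrite ffunE perm1.
    by rewrite HID.
  case: (IH (ltnW ht)) => [|[s [sa [sb sk]]]]; first by left.
  have hy : b - t.+1 < n by lia.
  pose u := Ordinal hy.
  have huv : val (s b) = (val u).+1 by change ((s b : nat) = (u : nat).+1); rewrite sb /=; lia.
  have lip := @ID_lip n L s _ _ huv.
  case: (ltngtP k' (inner_distance (permute_square (s * tperm u (s b))%g L))) => h.
  - right; exists (s * tperm u (s b))%g; split; last split => //.
    + rewrite permM sa tpermD //; apply/eqP => /(congr1 val) /=; lia.
    + by rewrite permM tpermR.
  - lia.
  - by left; exists (s * tperm u (s b))%g.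
case: (claim (b - a - 1) (leqnn _)) => [//|[s [sa [sb sk]]]].
exfalso; have := hle s; rewrite sa cdistE /cd sb; splitif; lia.
Qed.

Definition gval n j :=
  if j %% 2 == 1 then n %/ 2 - j %/ 2 else if j == 0 then 0 else n - j %/ 2.

Lemma gval_lt n j : j < n -> gval n j < n.
Proof. rewrite /gval; splitif; lia. Qed.

Lemma gval_inj n j1 j2 : j1 < n -> j2 < n -> gval n j1 = gval n j2 -> j1 = j2.
Proof. move=> h1 h2; rewrite /gval; splitif; lia. Qed.

Lemma gval_step n j : j.+1 < n -> (n - 1) %/ 2 <= cd n (gval n j) (gval n j.+1).
Proof. move=> h; rewrite /gval; splitif; rewrite /cd; splitif; lia. Qed.

Lemma gval12 n : 2 < n -> cd n (gval n 1) (gval n 2) = (n - 1) %/ 2.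
Proof. move=> h; rewrite /gval; splitif; rewrite /cd; splitif; lia. Qed.

Lemma perm_latin n (L : square n) s : is_latin L -> is_latin (permute_square s L).
Proof.
move=> [Hr Hc]; split => i; apply: injF_bij => x y; rewrite !ffunE => /perm_inj.
- exact: (bij_inj (Hr i)).
- exact: (bij_inj (Hc i)).
Qed.

Theorem mainTheorem10 (n : nat) (Hn : 5 <= n) :
  (forall k : nat, 1 <= k <= (n - 1) %/ 2 ->
     exists L : square n, is_latin L /\ inner_distance L = k) /\
  (forall (k : nat) (L : square n), is_latin L -> inner_distance L = k ->
     forall k' : nat, 1 <= k' < k ->
       exists s : {perm 'I_n}, inner_distance (permute_square s L) = k').
Proof.
have h3 : 2 < n by lia.
split; last by move=> k L; apply: part2.
have h0 : 0 < n by lia.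
have h1 : 1 < n by lia.
have h2 : 2 < n by lia.
pose L0 : square n := [ffun c : 'I_n * 'I_n =>
   Ordinal (ltn_pmod (gval n c.1 + gval n c.2) h0)].
have latin : is_latin L0.
  split => i; apply: injF_bij => x y /(congr1 val); rewrite !ffunE /= => E;
    apply: (@ord_inj n); apply: (@gval_inj n x y (ltn_ord x) (ltn_ord y)); move/eqP: E.
  - by rewrite eqn_modDl !modn_small ?gval_lt // => /eqP.
  - by rewrite ![_ + gval n i]addnC eqn_modDl !modn_small ?gval_lt // => /eqP.
have IDL : inner_distance L0 = (n - 1) %/ 2.
  pose p0 := ((Ordinal h0, Ordinal h1), (Ordinal h0, Ordinal h2)) :
     ('I_n * 'I_n) * ('I_n * 'I_n).
  apply/eqP; rewrite eqn_leq; apply/andP; split.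
    have := @bigmin_le _ _ (fun p => adjacent p.1 p.2)
      (fun p => cdist (L0 p.1) (L0 p.2)) n p0 (mem_index_enum _).
    rewrite /inner_distance /= cdistE !ffunE /= cd_shift ?gval_lt // gval12 //.
    by apply; rewrite /adjacent /= ?eqxx.
  rewrite /inner_distance; apply: (big_ind (fun x => (n - 1) %/ 2 <= x)).
  - lia.
  - move=> x y; lia.
  move=> [[i1 j1] [i2 j2]] hadj; rewrite /adjacent /= in hadj.
  rewrite cdistE !ffunE /=.
  case/orP: hadj => /andP[/eqP e /orP[/eqP h|/eqP h]]; subst.
  - rewrite cd_shift ?gval_lt // -h; apply: gval_step; rewrite h.
    exact: ltn_ord.
  - rewrite cd_shift ?gval_lt // cd_sym -h; apply: gval_step; rewrite h.
    exact: ltn_ord.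
  - rewrite (addnC (gval n i1)) (addnC (gval n i2)) cd_shift ?gval_lt // -h.
    apply: gval_step; rewrite h; exact: ltn_ord.
  - rewrite (addnC (gval n i1)) (addnC (gval n i2)) cd_shift ?gval_lt // cd_sym -h.
    apply: gval_step; rewrite h; exact: ltn_ord.
move=> k /andP[k1 k2].
case: (ltngtP k ((n - 1) %/ 2)) => h.
- have [s hs] := @part2 n h3 L0 _ latin IDL k ltac:(lia).
  exists (permute_square s L0); split => //; exact: perm_latin.
- lia.
- by exists L0; rewrite h.
Qed.
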